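(* Let $\mathbb Q$ be a probability measure on $(\Omega,\mathcal F)$ equivalent to $\mathbb P$, and let $(\mathcal B_n)_{n\in\mathbb N_0}$ be $\sigma$-subfields. Then $\mathcal B_n\to\mathcal B_0$ in the almost-sure sense under $\mathbb P$ if and only if $\mathcal B_n\to\mathcal B_0$ in the almost-sure sense under $\mathbb Q$.
   Context: Let $(\Omega,\mathcal F,\mathbb P)$ be a (not necessarily complete) probability space and $\mathcal N:=\{F\in\mathcal F:\mathbb P(F)=0\}$. A $\sigma$-subfield is a sub-$\sigma$-field $\mathcal A\subset\mathcal F$ with $\mathcal A=\sigma(\mathcal A\cup\mathcal N)$. For a probability measure $\mathbb R\sim\mathbb P$ and a $\sigma$-subfield $\mathcal A$, $\mathbb R_{\mathcal A}f:=\mathbb E^{\mathbb R}[f\mid\mathcal A]$. We say $\mathcal B_n\to\mathcal B_0$ in the almost-sure sense under $\mathbb R$ if for every $f\in L^1(\mathbb R)$, $\mathbb R$-a.s. $\mathbb R_{\mathcal B_n}f\to\mathbb R_{\mathcal B_0}f$ as $n\to\infty$. *)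

(* Defs.v *)
From HB Require Import structures.
From mathcomp Require Import all_boot all_order all_algebra.
From mathcomp Require Import all_classical all_reals all_analysis.
Set Implicit Arguments. Unset Strict Implicit. Unset Printing Implicit Defensive.
Import Order.TTheory GRing.Theory Num.Theory numFieldNormedType.Exports.
Local Open Scope classical_set_scope.
Local Open Scope ring_scope.

Definition null_sets d (T : measurableType d) (R : realType)
    (P : {measure set T -> \bar R}) : set (set T) :=
  [set N | measurable N /\ P N = 0%E].

Definition equiv_measure d (T : measurableType d) (R : realType)
    (P Q : {measure set T -> \bar R}) : Prop :=
  forall A : set T, measurable A -> (P A = 0%E <-> Q A = 0%E).

Definition sigma_subfield d (T : measurableType d) (R : realType)
    (P : {measure set T -> \bar R}) (A : set (set T)) : Prop :=
  [/\ sigma_algebra setT A, A `<=` measurable & A = <<s A `|` null_sets P >>].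

Definition measurable_wrt d (T : measurableType d) (R : realType)
    (A : set (set T)) (g : T -> R) : Prop :=
  forall B : set R, measurable B -> A (g @^-1` B).

Definition is_cond_exp d (T : measurableType d) (R : realType)
    (Rm : {measure set T -> \bar R}) (A : set (set T)) (f g : T -> R) : Prop :=
  [/\ measurable_wrt A g, Rm.-integrable setT (EFin \o g) &
      forall B, A B -> (\int[Rm]_(x in B) (g x)%:E = \int[Rm]_(x in B) (f x)%:E)%E].

(* B_n -> B_0 in the almost-sure sense under Rm: for every f in L^1(Rm),
   (any versions of) the conditional expectations converge Rm-a.s. *)
Definition as_conv d (T : measurableType d) (R : realType)
    (Rm : {measure set T -> \bar R}) (B : nat -> set (set T)) : Prop :=
  forall f : T -> R, measurable_fun setT f -> Rm.-integrable setT (EFin \o f) ->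
  forall g : nat -> T -> R, (forall n, is_cond_exp Rm (B n) f (g n)) ->
  \forall x \ae Rm, (g n x) @[n --> \oo] --> g 0%N x.

(* Main.v *)
Require Import Defs.
From HB Require Import structures.
From mathcomp Require Import all_boot all_order all_algebra.
From mathcomp Require Import all_classical all_reals all_analysis.
From mathcomp Require Import measurable_realfun.
Set Implicit Arguments. Unset Strict Implicit. Unset Printing Implicit Defensive.
Import Order.TTheory GRing.Theory Num.Theory numFieldNormedType.Exports.
Local Open Scope classical_set_scope.
Local Open Scope ring_scope.
Section key.
Context d (T : measurableType d) (R : realType) (P Q : probability T R) (G : set (set T)).
Hypothesis sG : sigma_algebra setT G.
Hypothesis GF : G `<=` measurable.
Hypothesis PQ : forall A, measurable A -> P A = 0%E -> Q A = 0%E.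
Let Tg := g_sigma_algebraType G.

Let sGE : <<s G >> = G. Proof. exact: sigma_algebra_id. Qed.

Lemma mwrtP (h : T -> R) : measurable_wrt G h <-> measurable_fun (setT : set Tg) h.
Proof.
split=> [mh _ B mB|mh B mB]; first by rewrite setTI; change (<<s G >> (h @^-1` B)); rewrite sGE; exact: mh.
have := mh measurableT B mB; rewrite setTI.
by change (<<s G >> (h @^-1` B) -> G (h @^-1` B)); rewrite sGE.
Qed.

Lemma mwrtT (h : T -> R) : measurable_wrt G h -> measurable_fun setT h.
Proof. by move=> mh _ B mB; rewrite setTI; exact: GF (mh B mB). Qed.

Let mid : measurable_fun setT (id : T -> Tg).
Proof.
move=> _ A mA; rewrite setTI /=.
have : <<s G >> A by [].
by rewrite sGE => /GF.
Qed.
Let idm : {mfun T >-> Tg} := MeasurableFun.Pack (MeasurableFun.Class (isMeasurableFun.Build _ _ _ _ _ mid)).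
Let P' := distribution P idm.
Let Q' := distribution Q idm.

Let QP' : Q' `<< P'.
Proof.
apply/null_content_dominatesP => A mA /= P'A0.
have GA : G A by rewrite -sGE.
exact: PQ (GF GA) P'A0.
Qed.

Let Z := Radon_Nikodym_SigmaFinite.f Q' P'.
Let Zr := Radon_Nikodym (charge_of_finite_measure Q') P'.
Let k : T -> R := fun x => fine (Z x).

Let Z_ge0 x : (0 <= Z x)%E. Proof. exact: Radon_Nikodym_SigmaFinite.f_ge0. Qed.
Let Z_fin x : Z x \is a fin_num. Proof. exact: Radon_Nikodym_SigmaFinite.f_fin_num. Qed.
Let Z_int : P'.-integrable setT Z. Proof. exact: Radon_Nikodym_SigmaFinite.f_integrable. Qed.
Let mZ : measurable_fun setT Z. Proof. exact: (measurable_int P' Z_int). Qed.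
Let kE x : ((k x)%:E = Z x). Proof. by rewrite /k fineK. Qed.

Lemma mk : measurable_wrt G k.
Proof. by apply/mwrtP; apply: measurableT_comp => //. Qed.

Local Open Scope ereal_scope.
Lemma key_int (h : T -> R) : measurable_wrt G h -> Q.-integrable setT (EFin \o h) ->
  P.-integrable setT (EFin \o (fun x => h x * k x)%R) /\
  forall A, G A -> \int[P]_(x in A) (h x * k x)%:E = \int[Q]_(x in A) (h x)%:E.
Proof.
move=> mh ih.
have mhg := proj1 (mwrtP h) mh.
pose H : Tg -> \bar R := EFin \o h.
have mH : measurable_fun (setT : set Tg) H by apply/measurable_EFinP.
have iQ' : Q'.-integrable setT H.
  rewrite /Q' /distribution.
  by apply: (integrable_pushforward mid) => //.
have mHZ : measurable_fun (setT : set Tg) (fun x => H x * Z x) by apply: emeasurable_funM.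
have eqabs : \int[P']_x `|H x * Z x| = \int[Q']_x `|H x|.
  rewrite -(Radon_Nikodym_SigmaFinite.change_of_variables QP' (f := fun x => `|H x|)) //; last first.
    exact: measurableT_comp.
  by apply: eq_integral => x _; rewrite abseM (gee0_abs (Z_ge0 x)).
have iPZ : P'.-integrable setT (fun x => H x * Z x).
  apply/integrableP; split => //; rewrite eqabs.
  by case/integrableP: iQ'.
have eqA A : G A -> \int[P']_(x in A) (H x * Z x) = \int[Q']_(x in A) H x.
  move=> GA; have mA : measurable (A : set Tg) by change (<<s G >> A); rewrite sGE.
  rewrite -(Radon_Nikodym_change_of_variables QP' mA); last exact: integrableS iQ'.
  apply: ae_eq_integral => //.
  - exact: measurable_funTS.
  - apply: emeasurable_funM; first exact: measurable_funTS.
    exact: measurable_funTS.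
  - by apply: ae_eqe_mul2l; exact: ae_eq_Radon_Nikodym_SigmaFinite.
have pE x : (h x * k x)%:E = H x * Z x by rewrite EFinM kE.
have mhk : measurable_fun setT (EFin \o (fun x => h x * k x)%R).
  apply/measurable_EFinP; apply: measurable_funM; first exact: mwrtT.
  exact: mwrtT mk.
have iP : P.-integrable setT (EFin \o (fun x => h x * k x)%R).
  apply/integrableP; split => //.
  have := integrableP _ _ _ iPZ => -[_].
  rewrite /P' /distribution ge0_integral_pushforward //; last first.
    exact: measurableT_comp.
  move=> h1; rewrite (eq_integral (fun x : T => `|H x * Z x|)); first exact: h1.
  by move=> x _; rewrite -pE.
split => // A GA.
have mA : measurable (A : set Tg) by change (<<s G >> A); rewrite sGE.
transitivity (\int[P']_(x in A) (H x * Z x)).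
  rewrite /P' /distribution integral_pushforward //; last first.
    apply: (integrableS measurableT) => //; first exact: GF.
    by apply: (eq_integrable measurableT _ _ _ iP) => x _; exact: pE.
  by apply: eq_integral => x _; rewrite [LHS]pE.
rewrite eqA // /Q' /distribution integral_pushforward //.
apply: (integrableS measurableT) => //; exact: GF.
Qed.

Lemma key_ex : exists k : T -> R, measurable_wrt G k /\
  forall h : T -> R, measurable_wrt G h -> Q.-integrable setT (EFin \o h) ->
  P.-integrable setT (EFin \o (fun x => h x * k x)%R) /\
  forall A, G A -> \int[P]_(x in A) (h x * k x)%:E = \int[Q]_(x in A) (h x)%:E.
Proof. by exists k; split; [exact: mk|exact: key_int]. Qed.
End key.

Section main.
Context d (T : measurableType d) (R : realType) (P Q : probability T R) (B : nat -> set (set T)).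
Local Open Scope ereal_scope.

Lemma mfun_wrt (h : T -> R) : measurable_fun setT h -> measurable_wrt measurable h.
Proof. by move=> mh A mA; have := mh measurableT A mA; rewrite setTI. Qed.

Lemma wrt_mfun (h : T -> R) : measurable_wrt measurable h -> measurable_fun setT h.
Proof. by move=> mh _ A mA; rewrite setTI; exact: mh. Qed.

Lemma main_dir : (forall A, measurable A -> (P A = 0 <-> Q A = 0)) ->
  (forall n, sigma_algebra setT (B n) /\ B n `<=` measurable) ->
  as_conv P B -> as_conv Q B.
Proof.
move=> eqv hB asP f mf iQf g hg.
have PQ A : measurable A -> P A = 0 -> Q A = 0 by move=> mA /(eqv A mA).
have [z [mz hz]] := key_ex (@sigma_algebra_measurable _ T) (@subset_refl _ _) PQ.
have [k hk] := choice (fun n => key_ex (proj1 (hB n)) (proj2 (hB n)) PQ).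
have [ifz eqfz] := hz f (mfun_wrt mf) iQf.
have mwB n : forall h1 h2 : T -> R, measurable_wrt (B n) h1 -> measurable_wrt (B n) h2 ->
    measurable_wrt (B n) (fun x => h1 x * h2 x)%R.
  move=> h1 h2 m1 m2; apply/(mwrtP (proj1 (hB n))).
  apply: measurable_funM; exact/(mwrtP (proj1 (hB n))).
have vu n : is_cond_exp P (B n) (fun x => f x * z x)%R (fun x => g n x * k n x)%R.
  have [mg ig eg] := hg n.
  have [mk hkn] := hk n.
  have [ig' eg'] := hkn (g n) mg ig.
  split => //; first exact: mwB.
  move=> A BA; rewrite eg' //.
rewrite eqfz; last exact: (proj2 (hB n)).
exact: eg.
have mfz : measurable_fun setT (fun x => f x * z x)%R.
  by apply: measurable_funM => //; exact: wrt_mfun.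
have c1 := asP _ mfz ifz _ vu.
have mw1 n : measurable_wrt (B n) (fun _ => 1%R : R).
  by apply/(mwrtP (proj1 (hB n))); exact: measurable_cst.
have i1 : Q.-integrable setT (EFin \o (fun _ => 1%R : R)).
  exact: finite_measure_integrable_cst.
have [iz eqz] := hz _ (mfun_wrt (measurable_cst (1%R : R))) i1.
have vk n : is_cond_exp P (B n) z (k n).
  have [mk hkn] := hk n.
  have [ik ek] := hkn _ (mw1 n) i1.
  split => //.
  - by apply: (eq_integrable measurableT _ _ _ ik) => x _ /=; rewrite mul1r.
  - move=> A BA; have mA := proj2 (hB n) A BA.
    transitivity (\int[P]_(x in A) (1 * k n x)%:E).
      by apply: eq_integral => x _; rewrite mul1r.
    rewrite ek // -eqz //.
    by apply: eq_integral => x _; rewrite mul1r.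
have mz' : measurable_fun setT z by exact: wrt_mfun.
have iz' : P.-integrable setT (EFin \o z).
  by apply: (eq_integrable measurableT _ _ _ iz) => x _ /=; rewrite mul1r.
have c2 := asP _ mz' iz' _ vk.
have c3 : \forall x \ae P, k 0%N x != 0%R.
  have [mk0 hk0] := hk 0%N.
  have [_ ek0] := hk0 _ (mw1 0%N) i1.
  pose S := k 0%N @^-1` [set 0%R].
  have BS : B 0%N S by apply: mk0.
  have mS : measurable S := proj2 (hB 0%N) S BS.
  have QS : Q S = 0.
    transitivity (\int[Q]_(x in S) (cst 1) x); first by rewrite integral_cst // mul1e.
    transitivity (\int[Q]_(x in S) ((fun _ => 1%R : R) x)%:E) => //.
    rewrite -ek0 //.
    transitivity (\int[P]_(x in S) (cst 0) x); last by rewrite integral_cst // mul0e.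
    apply: eq_integral => x; rewrite inE /S /= => ->; by rewrite mulr0.
  have PS : P S = 0 by apply/(eqv S mS).
  exists S; split => // x /= /negP; rewrite negbK => /eqP; exact.
have c4 : \forall x \ae P, g n x @[n --> \oo] --> g 0%N x.
  apply: (filterS3 _ _ c1 c2 c3) => x H1 H2 H3.
  have H4 : (fun n => g n x * k n x * (k n x)^-1)%R @ \oo --> (g 0%N x * k 0%N x * (k 0%N x)^-1)%R.
    by apply: cvgM => //; exact: cvgV.
  have -> : g 0%N x = (g 0%N x * k 0%N x * (k 0%N x)^-1)%R by rewrite mulfK.
  apply: cvg_trans; last exact: H4.
  apply: near_eq_cvg.
  apply: (filterS _ (cvgr_neq0 (k 0%N x) H2 H3)) => n /= hn.
  by rewrite mulfK.
case: c4 => N [mN PN sN].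
exists N; split => //; exact: PQ.
Qed.
End main.

Theorem proposition4p6 (d : measure_display) (T : measurableType d)
  (R : realType) (P Q : probability T R) (B : nat -> set (set T)) :
  equiv_measure P Q ->
  (forall n, sigma_subfield P (B n)) ->
  (as_conv P B <-> as_conv Q B).
Proof.
move=> eqv hB.
have hB' n : sigma_algebra setT (B n) /\ B n `<=` measurable.
  by have [h1 h2 _] := hB n.
split; first exact: main_dir.
apply: main_dir => // A mA; apply: iff_sym; exact: eqv.
Qed.
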